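(* Let $\gamma=(\gamma_1,\gamma_2)\ge(0,0)$, $\varkappa\ge0$, and $\tilde\gamma\in\mathbb R^2$ with $-\gamma\le\tilde\gamma\le\gamma$. If $A\in\mathcal M_{\gamma,\varkappa}$ and $\zeta\in Y_{\tilde\gamma}$, then $A\zeta$, defined by $(A\zeta)_a=\sum_{b\in\mathcal L}A_a^b\zeta_b$, is well defined (the series converge), $A\zeta\in Y_{\tilde\gamma}$, and $$\|A\zeta\|_{\tilde\gamma}\le|A|_{\gamma,\varkappa}\,\|\zeta\|_{\tilde\gamma}.$$
   Context: Let $d_*\ge1$ and $\mathcal L\subset\mathbb Z^{d_*}$. For $a\in\mathbb Z^{d_*}$, $\langle a\rangle=\max(|a|,1)$ and $[a-b]=\min(|a-b|,|a+b|)$; pairs in $\mathbb R^2$ are ordered componentwise. For $\gamma=(\gamma_1,\gamma_2)\in\mathbb R^2$, $Y_\gamma$ is the space of sequences $\zeta=(\zeta_a)_{a\in\mathcal L}\in(\mathbb C^2)^{\mathcal L}$ with $\|\zeta\|_\gamma^2=\sum_{a\in\mathcal L}|\zeta_a|^2e^{2\gamma_1|a|}\langle a\rangle^{2\gamma_2}<\infty$ ($|\cdot|$ the Hermitian norm on $\mathbb C^2$). For $\varkappa\ge0$ let $e_{\gamma,\varkappa}(a,b)=C\,e^{\gamma_1[a-b]}\max([a-b],1)^{\gamma_2}\min(\langle a\rangle,\langle b\rangle)^{\varkappa}$, where $C\ge1$ is a fixed constant taken sufficiently large depending only on $\gamma_2,\varkappa$ (standing assumption). For a matrix $A=(A_a^b)_{a,b\in\mathcal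 L}$ of complex $2\times 2$ blocks, $|A|_{\gamma,\varkappa}=\max\{\sup_a\sum_b\|A_a^b\|e_{\gamma,\varkappa}(a,b),\ \sup_b\sum_a\|A_a^b\|e_{\gamma,\varkappa}(a,b)\}$ (operator norms of the blocks), and $\mathcal M_{\gamma,\varkappa}$ is the space of such matrices with finite norm. *)

(* Defs.v *)
From HB Require Import structures.
From mathcomp Require Import all_boot all_order all_algebra.
From mathcomp Require Import complex.
From mathcomp Require Import all_classical all_reals all_analysis.
From mathcomp Require Import Rstruct Rstruct_topology.
From Stdlib Require Import Rdefinitions.

Set Implicit Arguments.
Unset Strict Implicit.
Unset Printing Implicit Defensive.

Import Order.TTheory GRing.Theory Num.Theory.
Local Open Scope classical_set_scope.
Local Open Scope ring_scope.

Notation Zd d := 'rV[int]_d.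
Notation C2 := 'cV[R[i]]_2.
Notation M2 := 'M[R[i]]_2.

Definition zabs (d : nat) (a : Zd d) : R :=
  Num.sqrt (\sum_(i < d) ((a ord0 i)%:~R : R) ^+ 2).

Definition zbr (d : nat) (a : Zd d) : R := Num.max (zabs a) 1.

Definition zdist (d : nat) (a b : Zd d) : R :=
  Num.min (zabs (a - b)) (zabs (a + b)).

Definition hnorm (v : C2) : R :=
  Num.sqrt (\sum_(i < 2) ((@complex.Re R (v i ord0)) ^+ 2 + (@complex.Im R (v i ord0)) ^+ 2)).

Definition opnorm (M : M2) : R :=
  sup [set hnorm (M *m v) | v in [set v : C2 | hnorm v <= 1]].

Definition eweight (C g1 g2 kappa : R) (d : nat) (a b : Zd d) : R :=
  C * expR (g1 * zdist a b) * (Num.max (zdist a b) 1) `^ g2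
    * (Num.min (zbr a) (zbr b)) `^ kappa.

Definition ynorm2 (g1 g2 : R) (d : nat) (L : set (Zd d)) (z : Zd d -> C2)
  : \bar R :=
  \esum_(a in L) ((hnorm (z a)) ^+ 2 * expR (2 * g1 * zabs a)
                   * (zbr a) `^ (2 * g2))%:E.

Definition inY (g1 g2 : R) (d : nat) (L : set (Zd d)) (z : Zd d -> C2) : Prop :=
  (ynorm2 g1 g2 L z < +oo)%E.

(* ||zeta||_gamma (meaningful when inY) *)
Definition ynorm (g1 g2 : R) (d : nat) (L : set (Zd d)) (z : Zd d -> C2) : R :=
  Num.sqrt (fine (ynorm2 g1 g2 L z)).

(* |A|_{gamma,kappa} as an extended real; A a b is the block A_a^b *)
Definition mnormE (C g1 g2 kappa : R) (d : nat) (L : set (Zd d))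
  (A : Zd d -> Zd d -> M2) : \bar R :=
  maxe
    (ereal_sup [set (\esum_(b in L) (opnorm (A a b) * eweight C g1 g2 kappa a b)%:E)
               | a in L])
    (ereal_sup [set (\esum_(a in L) (opnorm (A a b) * eweight C g1 g2 kappa a b)%:E)
               | b in L]).

Definition inM (C g1 g2 kappa : R) (d : nat) (L : set (Zd d))
  (A : Zd d -> Zd d -> M2) : Prop :=
  (mnormE C g1 g2 kappa L A < +oo)%E.

Definition mnorm (C g1 g2 kappa : R) (d : nat) (L : set (Zd d))
  (A : Zd d -> Zd d -> M2) : R :=
  fine (mnormE C g1 g2 kappa L A).

Definition HasSum (T : choiceType) (L : set T) (f : T -> C2) (s : C2) : Prop :=
  forall eps : R, 0 < eps ->
    exists F0 : set T, [/\ finite_set F0, F0 `<=` L &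
      forall F : set T, finite_set F -> F0 `<=` F -> F `<=` L ->
        hnorm (\sum_(b \in F) f b - s) < eps].

(* Main.v *)
Require Import Defs.
From HB Require Import structures.
From mathcomp Require Import all_boot all_order all_algebra.
From mathcomp Require Import complex.
From mathcomp Require Import all_classical all_reals all_analysis.
From mathcomp Require Import Rstruct Rstruct_topology.
From Stdlib Require Import Rdefinitions.
Import Order.TTheory GRing.Theory Num.Theory.
Local Open Scope classical_set_scope.
Local Open Scope ring_scope.
Set Implicit Arguments. Unset Strict Implicit. Unset Printing Implicit Defensive.
From mathcomp Require Import ring lra.
Local Notation sqrt := Num.sqrt.


Lemma sqrt_le_of (x y : R) : 0 <= y -> x <= y ^+ 2 -> sqrt x <= y.
Proof.
move=> y0 h; rewrite -(ger0_norm y0) -sqrtr_sqr ler_sqrt //; exact: sqr_ge0.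
Qed.

Lemma quad_cs (P Q S : R) : (forall t, 0 <= P * t ^+ 2 - 2 * Q * t + S) ->
  0 <= P -> 0 <= S -> Q ^+ 2 <= P * S.
Proof.
move=> H P0 S0.
have [->|Q0] := eqVneq Q 0; first by rewrite expr0n /= mulr_ge0.
have [P0'|Pp] := eqVneq P 0.
  have := H ((S + 1) / (2 * Q)); rewrite P0' mul0r add0r.
  have -> : 2 * Q * ((S + 1) / (2 * Q)) = S + 1 by field; rewrite Q0.
  lra.
have Pp' : 0 < P by rewrite lt0r Pp.
have := H (Q / P).
have -> : P * (Q / P) ^+ 2 - 2 * Q * (Q / P) + S = (P * S - Q ^+ 2) / P by field.
rewrite pmulr_lge0 ?invr_gt0 //; lra.
Qed.

Lemma cs_seq (T : Type) (r : seq T) (k u : T -> R) : (forall x, 0 <= k x) ->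
  (\sum_(x <- r) k x * u x) ^+ 2 <= (\sum_(x <- r) k x) * (\sum_(x <- r) k x * u x ^+ 2).
Proof.
move=> k0; apply: quad_cs; last 2 first.
- by apply: sumr_ge0 => x _.
- by apply: sumr_ge0 => x _; rewrite mulr_ge0 // sqr_ge0.
move=> t.
have -> : (\sum_(x <- r) k x) * t ^+ 2 - 2 * (\sum_(x <- r) k x * u x) * t +
   \sum_(x <- r) k x * u x ^+ 2 = \sum_(x <- r) k x * (t - u x) ^+ 2.
  elim: r => [|x r IH]; rewrite ?big_nil ?big_cons; first ring.
  rewrite -IH; ring.
by apply: sumr_ge0 => x _; rewrite mulr_ge0 // sqr_ge0.
Qed.

Lemma cs_seq2 (T : Type) (r : seq T) (u v : T -> R) :
  (\sum_(x <- r) u x * v x) ^+ 2 <= (\sum_(x <- r) u x ^+ 2) * (\sum_(x <- r) v x ^+ 2).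
Proof.
apply: quad_cs; last 2 first.
- by apply: sumr_ge0 => x _; rewrite sqr_ge0.
- by apply: sumr_ge0 => x _; rewrite sqr_ge0.
move=> t.
have -> : (\sum_(x <- r) u x ^+ 2) * t ^+ 2 - 2 * (\sum_(x <- r) u x * v x) * t +
   \sum_(x <- r) v x ^+ 2 = \sum_(x <- r) (t * u x - v x) ^+ 2.
  elim: r => [|x r IH]; rewrite ?big_nil ?big_cons; first ring.
  rewrite -IH; ring.
by apply: sumr_ge0 => x _; rewrite sqr_ge0.
Qed.

Lemma mink_seq (T : Type) (r : seq T) (u v : T -> R) :
  sqrt (\sum_(x <- r) (u x + v x) ^+ 2) <=
  sqrt (\sum_(x <- r) u x ^+ 2) + sqrt (\sum_(x <- r) v x ^+ 2).
Proof.
have E : \sum_(x <- r) (u x + v x) ^+ 2 = \sum_(x <- r) u x ^+ 2 + 2 * \sum_(x <- r) u x * v x + \sum_(x <- r) v x ^+ 2.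
  elim: r => [|x r IH]; rewrite ?big_nil ?big_cons; first ring.
  rewrite IH; ring.
have := cs_seq2 r u v; rewrite E.
set P := \sum_(x <- r) u x ^+ 2; set S := \sum_(x <- r) v x ^+ 2.
set Q := \sum_(x <- r) u x * v x => cs.
have P0 : 0 <= P by apply: sumr_ge0 => x _; rewrite sqr_ge0.
have S0 : 0 <= S by apply: sumr_ge0 => x _; rewrite sqr_ge0.
apply: sqrt_le_of; first by rewrite addr_ge0 // sqrtr_ge0.
have hp := sqr_sqrtr P0; have hs := sqr_sqrtr S0.
have p0 := sqrtr_ge0 P; have s0 := sqrtr_ge0 S.
suff : Q <= sqrt P * sqrt S by nra.
have : Q ^+ 2 <= (sqrt P * sqrt S) ^+ 2 by rewrite exprMn hp hs.
have : 0 <= sqrt P * sqrt S by rewrite mulr_ge0.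
nra.
Qed.

Section Part2.
Local Open Scope complex_scope.

Definition i0 : 'I_2 := @Ordinal 2 0 isT.
Definition i1 : 'I_2 := @Ordinal 2 1 isT.

Lemma sum2 (V : nmodType) (F : 'I_2 -> V) : \sum_(i < 2) F i = (F i0 + F i1).
Proof.
rewrite !big_ord_recl big_ord0 GRing.addr0; congr (F _ + F _); exact: val_inj.
Qed.

Definition re (v : C2) i := complex.Re (v i ord0).
Definition im (v : C2) i := complex.Im (v i ord0).

Lemma hnormE v : hnorm v = sqrt (re v i0 ^+ 2 + im v i0 ^+ 2 + (re v i1 ^+ 2 + im v i1 ^+ 2)).
Proof. by rewrite /hnorm sum2. Qed.

Lemma hnorm_ge0 v : (0 <= hnorm v).
Proof. exact: sqrtr_ge0. Qed.

Lemma ReD (x y : R[i]) : complex.Re (x + y) = (complex.Re x + complex.Re y).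
Proof. by case: x; case: y. Qed.
Lemma ImD (x y : R[i]) : complex.Im (x + y) = (complex.Im x + complex.Im y).
Proof. by case: x; case: y. Qed.
Lemma ReN (x : R[i]) : complex.Re (- x) = (- complex.Re x).
Proof. by case: x. Qed.
Lemma ImN (x : R[i]) : complex.Im (- x) = (- complex.Im x).
Proof. by case: x. Qed.
Lemma ReM (x y : R[i]) : complex.Re (x * y) = (complex.Re x * complex.Re y - complex.Im x * complex.Im y).
Proof. by case: x; case: y. Qed.
Lemma ImM (x y : R[i]) : complex.Im (x * y) = (complex.Re x * complex.Im y + complex.Im x * complex.Re y).
Proof. by case: x => a b; case: y => c d /=; ring. Qed.
Lemma Re_rc (c : R) : complex.Re (c%:C) = c. Proof. by []. Qed.
Lemma Im_rc (c : R) : complex.Im (c%:C) = 0%R. Proof. by []. Qed.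

Lemma hnormD u v : (hnorm (u + v) <= hnorm u + hnorm v).
Proof.
rewrite !hnormE /re /im !mxE !ReD !ImD.
set a0 := complex.Re (u i0 ord0); set b0 := complex.Im (u i0 ord0).
set a1 := complex.Re (u i1 ord0); set b1 := complex.Im (u i1 ord0).
set c0 := complex.Re (v i0 ord0); set d0 := complex.Im (v i0 ord0).
set c1 := complex.Re (v i1 ord0); set d1 := complex.Im (v i1 ord0).
have H := mink_seq [:: (a0, c0); (b0, d0); (a1, c1); (b1, d1)] fst snd.
rewrite !big_cons !big_nil /= in H.
have E : forall p q r s : R, p + q + (r + s) = p + (q + (r + (s + 0))) by move=> *; ring.
by rewrite !E.
Qed.

Lemma abs_le_sqrt (x S : R) : (x ^+ 2 <= S -> `|x| <= sqrt S).
Proof.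
move=> h; rewrite -sqrtr_sqr ler_sqrt //; apply: le_trans h; exact: sqr_ge0.
Qed.

Lemma hnorm_coord v i : (`|re v i| <= hnorm v /\ `|im v i| <= hnorm v).
Proof.
have P := sqr_ge0 (re v i0); have Q := sqr_ge0 (im v i0).
have P' := sqr_ge0 (re v i1); have Q' := sqr_ge0 (im v i1).
have [-> | ->] : i = i0 \/ i = i1.
  by case: i => -[|[|n]] Hn; [left|right|]; try exact: val_inj.
- by rewrite hnormE; split; apply: abs_le_sqrt; lra.
- by rewrite hnormE; split; apply: abs_le_sqrt; lra.
Qed.

Lemma hnorm_le4 v : (hnorm v <= `|re v i0| + `|im v i0| + `|re v i1| + `|im v i1|).
Proof.
rewrite hnormE; apply: sqrt_le_of; first by rewrite !addr_ge0.
have h1 := normr_ge0 (re v i0); have h2 := normr_ge0 (im v i0).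
have h3 := normr_ge0 (re v i1); have h4 := normr_ge0 (im v i1).
rewrite -(real_normK (num_real (re v i0))) -(real_normK (num_real (im v i0))).
rewrite -(real_normK (num_real (re v i1))) -(real_normK (num_real (im v i1))).
nra.
Qed.

Lemma hnormZ (c : R) v : (0 <= c) -> hnorm (c%:C *: v) = (c * hnorm v).
Proof.
move=> c0; rewrite !hnormE /re /im !mxE !ReM !ImM !Re_rc !Im_rc.
set X := (_ + _ + _).
have -> : X = c ^+ 2 * (complex.Re (v i0 ord0) ^+ 2 + complex.Im (v i0 ord0) ^+ 2 +
      (complex.Re (v i1 ord0) ^+ 2 + complex.Im (v i1 ord0) ^+ 2)). by rewrite /X !mul0r subr0 !addr0 !exprMn; ring.
by rewrite sqrtrM ?sqr_ge0 // sqrtr_sqr ger0_norm.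
Qed.

Lemma hnorm0 : hnorm 0 = 0%R.
Proof. by rewrite hnormE /re /im !mxE /= expr0n /= !addr0 sqrtr0. Qed.

Lemma prod_bound (p x h : R) : (`|x| <= h -> - (`|p| * h) <= p * x <= `|p| * h).
Proof.
move=> hx; rewrite -ler_norml normrM; apply: ler_wpM2l => //.
Qed.

Definition mbound (M : M2) : R :=
  (`|complex.Re (M i0 i0)| + `|complex.Im (M i0 i0)| + `|complex.Re (M i0 i1)| + `|complex.Im (M i0 i1)|
  + `|complex.Re (M i1 i0)| + `|complex.Im (M i1 i0)| + `|complex.Re (M i1 i1)| + `|complex.Im (M i1 i1)|).

Lemma fin4 (e1 e2 e3 e4 a1 a2 a3 a4 a5 a6 a7 a8 h : R) :
  `|e1| <= (a1 + a2 + a3 + a4) * h -> `|e2| <= (a1 + a2 + a3 + a4) * h ->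
  `|e3| <= (a5 + a6 + a7 + a8) * h -> `|e4| <= (a5 + a6 + a7 + a8) * h ->
  `|e1| + `|e2| + `|e3| + `|e4| <= 2 * (a1 + a2 + a3 + a4 + a5 + a6 + a7 + a8) * h.
Proof.
move=> n1 n2 n3 n4.
have -> : 2 * (a1 + a2 + a3 + a4 + a5 + a6 + a7 + a8) * h =
  (a1 + a2 + a3 + a4) * h + (a1 + a2 + a3 + a4) * h + (a5 + a6 + a7 + a8) * h + (a5 + a6 + a7 + a8) * h by ring.
lra.
Qed.

Lemma hnorm_mul_bound (M : M2) v : (hnorm (M *m v) <= 2 * mbound M * hnorm v).
Proof.
apply: le_trans (hnorm_le4 _) _.
rewrite /re /im !mxE !sum2 !ReD !ImD !ReM !ImM /mbound.
have [hx0 hy0] := hnorm_coord v i0; have [hx1 hy1] := hnorm_coord v i1.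
move: hx0 hy0 hx1 hy1; rewrite /re /im.
set x0 := complex.Re (v i0 ord0); set y0 := complex.Im (v i0 ord0).
set x1 := complex.Re (v i1 ord0); set y1 := complex.Im (v i1 ord0).
set h := hnorm v => hx0 hy0 hx1 hy1.
set p00 := complex.Re (M i0 i0); set q00 := complex.Im (M i0 i0).
set p01 := complex.Re (M i0 i1); set q01 := complex.Im (M i0 i1).
set p10 := complex.Re (M i1 i0); set q10 := complex.Im (M i1 i0).
set p11 := complex.Re (M i1 i1); set q11 := complex.Im (M i1 i1).
have := prod_bound p00 hx0; have := prod_bound p00 hy0;
have := prod_bound q00 hx0; have := prod_bound q00 hy0;
have := prod_bound p01 hx1; have := prod_bound p01 hy1;
have := prod_bound q01 hx1; have := prod_bound q01 hy1;
have := prod_bound p10 hx0; have := prod_bound p10 hy0;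
have := prod_bound q10 hx0; have := prod_bound q10 hy0;
have := prod_bound p11 hx1; have := prod_bound p11 hy1;
have := prod_bound q11 hx1; have := prod_bound q11 hy1.
move=> /andP[? ?] /andP[? ?] /andP[? ?] /andP[? ?] /andP[? ?] /andP[? ?] /andP[? ?] /andP[? ?].
move=> /andP[? ?] /andP[? ?] /andP[? ?] /andP[? ?] /andP[? ?] /andP[? ?] /andP[? ?] /andP[? ?].
set e1 := (p00 * x0 - q00 * y0 + (p01 * x1 - q01 * y1)).
set e2 := (p00 * y0 + q00 * x0 + (p01 * y1 + q01 * x1)).
set e3 := (p10 * x0 - q10 * y0 + (p11 * x1 - q11 * y1)).
set e4 := (p10 * y0 + q10 * x0 + (p11 * y1 + q11 * x1)).
have n1 : (`|e1| <= (`|p00| + `|q00| + `|p01| + `|q01|) * h) by rewrite ler_norml; apply/andP; split; rewrite /e1; lra.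
have n2 : (`|e2| <= (`|p00| + `|q00| + `|p01| + `|q01|) * h) by rewrite ler_norml; apply/andP; split; rewrite /e2; lra.
have n3 : (`|e3| <= (`|p10| + `|q10| + `|p11| + `|q11|) * h) by rewrite ler_norml; apply/andP; split; rewrite /e3; lra.
have n4 : (`|e4| <= (`|p10| + `|q10| + `|p11| + `|q11|) * h) by rewrite ler_norml; apply/andP; split; rewrite /e4; lra.
exact: fin4 n1 n2 n3 n4.
Qed.

End Part2.

Section Part3.
Local Open Scope complex_scope.

Lemma opnorm_has_sup (M : M2) :
  has_sup [set hnorm (M *m v) | v in [set v : C2 | hnorm v <= 1]].
Proof.
split; first by exists (hnorm (M *m 0)), 0 => //=; rewrite hnorm0.
exists (2 * mbound M * 1) => _ [v /= hv <-].
apply: le_trans (hnorm_mul_bound M v) _.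
apply: ler_wpM2l => //.
rewrite mulr_ge0 // /mbound !addr_ge0 //.
Qed.

Lemma opnorm_ge0 (M : M2) : 0 <= opnorm M.
Proof.
apply: le_trans (sup_upper_bound (opnorm_has_sup M) _); first exact: (hnorm_ge0 (M *m 0)).
by exists 0 => //=; rewrite hnorm0.
Qed.

Lemma opnorm_le (M : M2) v : hnorm (M *m v) <= opnorm M * hnorm v.
Proof.
have h0 := hnorm_ge0 v.
have [hz|hp] := eqVneq (hnorm v) 0.
  have := hnorm_mul_bound M v; rewrite hz !mulr0 => H.
  by apply: le_trans H _.
have hp' : 0 < hnorm v by rewrite lt0r hp.
set c := (hnorm v)^-1.
have c0 : 0 <= c by rewrite invr_ge0.
have : hnorm (M *m (c%:C *: v)) <= opnorm M.
  apply: sup_upper_bound; first exact: opnorm_has_sup.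
  exists (c%:C *: v) => //=; rewrite hnormZ // mulVf //.
rewrite -scalemxAr hnormZ // /c => H.
by rewrite -ler_pdivrMr // mulrC.
Qed.

Lemma hnorm_sum (T : Type) (r : seq T) (f : T -> C2) :
  hnorm (\sum_(x <- r) f x) <= \sum_(x <- r) hnorm (f x).
Proof.
elim: r => [|x r IH]; first by rewrite !big_nil hnorm0.
rewrite !big_cons; apply: le_trans (hnormD _ _) _; exact: lerD.
Qed.

End Part3.


Section ES.
Variables (T : choiceType) (L : set T).

Lemma esum_le_fin (h : T -> R) (c : R) :
  (forall F, finite_set F -> F `<=` L -> \sum_(x \in F) h x <= c) ->
  (\esum_(x in L) (h x)%:E <= c%:E)%E.
Proof.
move=> H; apply: ge_ereal_sup => _ [F [fF FL] <-].
rewrite fsumEFin // lee_fin; exact: H.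
Qed.

Lemma fin_le_esum (h : T -> R) F : finite_set F -> F `<=` L ->
  ((\sum_(x \in F) h x)%:E <= \esum_(x in L) (h x)%:E)%E.
Proof.
move=> fF FL; rewrite -fsumEFin //; apply: ereal_sup_ubound; by exists F.
Qed.

Lemma esum_fin (h : T -> R) (c : R) : (forall x, L x -> 0 <= h x) ->
  (\esum_(x in L) (h x)%:E <= c%:E)%E ->
  \esum_(x in L) (h x)%:E = (fine (\esum_(x in L) (h x)%:E))%:E.
Proof.
move=> h0 hc; rewrite fineK // ge0_fin_numE; last first.
  by apply: esum_ge0 => x Lx; rewrite lee_fin h0.
by apply: le_lt_trans hc _; exact: ltry.
Qed.

Lemma fsum_mono (h : T -> R) F0 F : finite_set F0 -> finite_set F -> F0 `<=` F ->
  (forall x, F x -> 0 <= h x) -> \sum_(x \in F0) h x <= \sum_(x \in F) h x.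
Proof.
move=> f0 f F0F h0; rewrite -lee_fin -!fsumEFin //.
apply: lee_fsum_nneg_subset => //; first exact/subsetP.
by move=> t; rewrite inE => /andP[_]; rewrite inE lee_fin => /h0.
Qed.

Lemma esum_approx (h : T -> R) (S eps : R) :
  \esum_(x in L) (h x)%:E = S%:E -> 0 < eps ->
  exists F0, [/\ finite_set F0, F0 `<=` L & S - eps < \sum_(x \in F0) h x].
Proof.
move=> hS e0.
have : ((S - eps)%:E < \esum_(x in L) (h x)%:E)%E by rewrite hS lte_fin; lra.
move=> /ereal_sup_gt [_ [F [fF FL] <-]]; rewrite fsumEFin // lte_fin => H.
by exists F.
Qed.

Lemma conv_nonneg (h : T -> R) (S : R) : (forall x, L x -> 0 <= h x) ->
  \esum_(x in L) (h x)%:E = S%:E ->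
  forall eps, 0 < eps -> exists F0, [/\ finite_set F0, F0 `<=` L &
    forall F, finite_set F -> F0 `<=` F -> F `<=` L -> `|\sum_(x \in F) h x - S| < eps].
Proof.
move=> h0 hS eps e0; have [F0 [f0 F0L H]] := esum_approx hS e0.
exists F0; split => // F fF F0F FL.
have h1 : \sum_(x \in F) h x <= S by rewrite -lee_fin -hS; exact: fin_le_esum.
have h2 := fsum_mono f0 fF F0F (fun x Fx => h0 x (FL x Fx)).
rewrite ler0_norm; lra.
Qed.

Lemma conv_real (g : T -> R) (c : R) :
  (\esum_(x in L) (`|g x|)%:E <= c%:E)%E ->
  exists s, forall eps, 0 < eps -> exists F0, [/\ finite_set F0, F0 `<=` L &
    forall F, finite_set F -> F0 `<=` F -> F `<=` L -> `|\sum_(x \in F) g x - s| < eps].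
Proof.
move=> hc.
pose p x := (`|g x| + g x) / 2; pose n x := (`|g x| - g x) / 2.
have gn x : - g x <= `|g x| by rewrite -normrN ler_norm.
have gp x : g x <= `|g x| by rewrite ler_norm.
have p0 x : L x -> 0 <= p x by move=> _; rewrite /p; have := gn x; lra.
have n0 x : L x -> 0 <= n x by move=> _; rewrite /n; have := gp x; lra.
have pc : (\esum_(x in L) (p x)%:E <= c%:E)%E.
  apply: le_trans hc; apply: le_esum => x _; rewrite lee_fin /p; have := gp x; lra.
have nc : (\esum_(x in L) (n x)%:E <= c%:E)%E.
  apply: le_trans hc; apply: le_esum => x _; rewrite lee_fin /n; have := gn x; lra.
have Ep := esum_fin p0 pc; have En := esum_fin n0 nc.
set Sp := fine _ in Ep; set Sn := fine _ in En.
exists (Sp - Sn) => eps e0.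
have e2 : 0 < eps / 2 by rewrite divr_gt0.
have [Fp [fp FpL Hp]] := conv_nonneg p0 Ep e2.
have [Fn [fn FnL Hn]] := conv_nonneg n0 En e2.
exists (Fp `|` Fn); split.
- by rewrite finite_setU.
- by move=> x [/FpL|/FnL].
move=> F fF F0F FL.
have := Hp F fF (fun x hx => F0F x (or_introl hx)) FL.
have := Hn F fF (fun x hx => F0F x (or_intror hx)) FL.
have -> : \sum_(x \in F) g x = \sum_(x \in F) p x - \sum_(x \in F) n x.
  rewrite !fsbig_finite //= -sumrB; by apply: eq_bigr => x _; rewrite /p /n; field.
move=> a b.
have := ler_normD (\sum_(x \in F) p x - Sp) (- (\sum_(x \in F) n x - Sn)).
rewrite normrN.
have -> : \sum_(x \in F) p x - Sp + - (\sum_(x \in F) n x - Sn) =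
  \sum_(x \in F) p x - \sum_(x \in F) n x - (Sp - Sn) by ring.
lra.
Qed.

End ES.


Lemma Re_sum (T : Type) (r : seq T) (g : T -> R[i]) :
  complex.Re (\sum_(x <- r) g x) = \sum_(x <- r) complex.Re (g x).
Proof. elim: r => [|x r IH]; first by rewrite !big_nil. by rewrite !big_cons ReD IH. Qed.
Lemma Im_sum (T : Type) (r : seq T) (g : T -> R[i]) :
  complex.Im (\sum_(x <- r) g x) = \sum_(x <- r) complex.Im (g x).
Proof. elim: r => [|x r IH]; first by rewrite !big_nil. by rewrite !big_cons ImD IH. Qed.

Lemma re_fsum (T : choiceType) (F : set T) (f : T -> C2) (s : C2) i : finite_set F ->
  re (\sum_(x \in F) f x - s) i = \sum_(x \in F) re (f x) i - re s i.
Proof.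
move=> fF; rewrite /re !mxE ReD ReN !fsbig_finite //= summxE Re_sum //.
Qed.
Lemma im_fsum (T : choiceType) (F : set T) (f : T -> C2) (s : C2) i : finite_set F ->
  im (\sum_(x \in F) f x - s) i = \sum_(x \in F) im (f x) i - im s i.
Proof.
move=> fF; rewrite /im !mxE ImD ImN !fsbig_finite //= summxE Im_sum //.
Qed.

Lemma exists_hassum (T : choiceType) (L : set T) (f : T -> C2) (c : R) :
  (\esum_(x in L) (hnorm (f x))%:E <= c%:E)%E -> exists s, HasSum L f s.
Proof.
move=> hc.
have hr i : (\esum_(x in L) (`|re (f x) i|)%:E <= c%:E)%E.
  apply: le_trans hc; apply: le_esum => x _; rewrite lee_fin.
  by have [] := hnorm_coord (f x) i.
have hi i : (\esum_(x in L) (`|im (f x) i|)%:E <= c%:E)%E.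
  apply: le_trans hc; apply: le_esum => x _; rewrite lee_fin.
  by have [] := hnorm_coord (f x) i.
have [sr0 H1] := conv_real (hr i0).
have [si0 H2] := conv_real (hi i0).
have [sr1 H3] := conv_real (hr i1).
have [si1 H4] := conv_real (hi i1).
pose s : C2 := \col_(i < 2) (if i == i0 then Complex sr0 si0 else Complex sr1 si1).
exists s => eps e0.
have e4 : 0 < eps / 4 by rewrite divr_gt0.
have [F1 [f1 F1L K1]] := H1 _ e4.
have [F2 [f2 F2L K2]] := H2 _ e4.
have [F3 [f3 F3L K3]] := H3 _ e4.
have [F4 [f4 F4L K4]] := H4 _ e4.
exists (F1 `|` F2 `|` F3 `|` F4); split.
- by rewrite !finite_setU.
- by move=> x [[[/F1L|/F2L]|/F3L]|/F4L].
move=> F fF F0F FL.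
have k1 := K1 F fF (fun x h => F0F x (or_introl (or_introl (or_introl h)))) FL.
have k2 := K2 F fF (fun x h => F0F x (or_introl (or_introl (or_intror h)))) FL.
have k3 := K3 F fF (fun x h => F0F x (or_introl (or_intror h))) FL.
have k4 := K4 F fF (fun x h => F0F x (or_intror h)) FL.
apply: le_lt_trans (hnorm_le4 _) _.
rewrite !re_fsum // !im_fsum //.
have -> : re s i0 = sr0 by rewrite /re mxE.
have -> : im s i0 = si0 by rewrite /im mxE.
have -> : re s i1 = sr1 by rewrite /re mxE.
have -> : im s i1 = si1 by rewrite /im mxE.
lra.
Qed.


Lemma fsum_le (T : choiceType) (F : set T) (h1 h2 : T -> R) : finite_set F ->
  (forall x, F x -> h1 x <= h2 x) -> \sum_(x \in F) h1 x <= \sum_(x \in F) h2 x.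
Proof.
move=> fF H; rewrite !fsbig_finite //= big_seq [X in _ <= X]big_seq.
apply: ler_sum => x; rewrite in_fset_set // inE; exact: H.
Qed.

Lemma fsum_ge0 (T : choiceType) (F : set T) (h : T -> R) : finite_set F ->
  (forall x, F x -> 0 <= h x) -> 0 <= \sum_(x \in F) h x.
Proof.
move=> fF H; rewrite fsbig_finite //= big_seq; apply: sumr_ge0 => x.
rewrite in_fset_set // inE; exact: H.
Qed.

Lemma sqrt_ge_of (x z : R) : 0 <= x -> x ^+ 2 <= z -> x <= sqrt z.
Proof.
move=> x0 h; rewrite -(ger0_norm x0) -sqrtr_sqr ler_sqrt //; apply: le_trans h; exact: sqr_ge0.
Qed.

Section Schur.
Variables (T : choiceType) (L : set T) (K : T -> T -> R) (y : T -> R) (M Y : R).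
Hypotheses (K0 : forall a b, 0 <= K a b) (y0 : forall b, 0 <= y b) (M0 : 0 <= M).
Hypothesis row : forall a, L a -> (\esum_(b in L) (K a b)%:E <= M%:E)%E.
Hypothesis col : forall b, L b -> (\esum_(a in L) (K a b)%:E <= M%:E)%E.
Hypothesis hY : \esum_(b in L) (y b ^+ 2)%:E = Y%:E.

Definition sch a := fine (\esum_(b in L) (K a b * y b)%:E).
Definition uu a := fine (\esum_(b in L) (K a b * y b ^+ 2)%:E).

Let fy2 G : finite_set G -> G `<=` L -> \sum_(b \in G) y b ^+ 2 <= Y.
Proof. by move=> fG GL; rewrite -lee_fin -hY; exact: fin_le_esum. Qed.

Let frow a G : L a -> finite_set G -> G `<=` L -> \sum_(b \in G) K a b <= M.
Proof. by move=> La fG GL; rewrite -lee_fin; apply: le_trans (row La); exact: fin_le_esum. Qed.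

Let fcol b G : L b -> finite_set G -> G `<=` L -> \sum_(a \in G) K a b <= M.
Proof. by move=> Lb fG GL; rewrite -lee_fin; apply: le_trans (col Lb); exact: fin_le_esum. Qed.

Let KleM a b : L a -> L b -> K a b <= M.
Proof.
move=> La Lb; have := frow La (finite_set1 b) (fun x (e : [set b] x) => eq_ind_r L Lb e).
by rewrite fsbig_set1.
Qed.

Let uu_fin a : L a -> \esum_(b in L) (K a b * y b ^+ 2)%:E = (uu a)%:E.
Proof.
move=> La; apply: (@esum_fin _ _ _ (M * Y)).
  by move=> b _; rewrite mulr_ge0 // sqr_ge0.
apply: esum_le_fin => G fG GL.
apply: le_trans (_ : \sum_(b \in G) M * y b ^+ 2 <= _).
  apply: fsum_le => // b Gb; apply: ler_wpM2r; first exact: sqr_ge0.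
  exact: KleM (GL b Gb).
rewrite fsbig_finite //= -mulr_sumr -fsbig_finite //; apply: ler_wpM2l => //.
exact: fy2.
Qed.

Let fuu a G : L a -> finite_set G -> G `<=` L -> \sum_(b \in G) K a b * y b ^+ 2 <= uu a.
Proof. by move=> La fG GL; rewrite -lee_fin -uu_fin //; exact: fin_le_esum. Qed.

Let cs_fin a G : L a -> finite_set G -> G `<=` L -> \sum_(b \in G) K a b * y b <= sqrt (M * uu a).
Proof.
move=> La fG GL; apply: sqrt_ge_of.
  by apply: fsum_ge0 => // b _; rewrite mulr_ge0.
apply: le_trans (_ : (\sum_(b \in G) K a b) * (\sum_(b \in G) K a b * y b ^+ 2) <= _).
  rewrite !fsbig_finite //=; exact: cs_seq.
apply: ler_pM.
- exact: fsum_ge0.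
- by apply: fsum_ge0 => // b _; rewrite mulr_ge0 // sqr_ge0.
- exact: frow.
- exact: fuu.
Qed.

Lemma sch_fin a : L a -> \esum_(b in L) (K a b * y b)%:E = (sch a)%:E.
Proof.
move=> La; apply: (@esum_fin _ _ _ (sqrt (M * uu a))).
  by move=> b _; rewrite mulr_ge0.
apply: esum_le_fin => G fG GL; exact: cs_fin.
Qed.

Lemma sch_ge a G : L a -> finite_set G -> G `<=` L -> \sum_(b \in G) K a b * y b <= sch a.
Proof. by move=> La fG GL; rewrite -lee_fin -sch_fin //; exact: fin_le_esum. Qed.

Let sch_ge0 a : L a -> 0 <= sch a.
Proof.
move=> La; have := sch_ge La (finite_set0 T) (@sub0set _ L).
by rewrite fsbig_set0.
Qed.

Let sch_sq a : L a -> sch a ^+ 2 <= M * uu a.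
Proof.
move=> La.
have h : sch a <= sqrt (M * uu a).
  rewrite -lee_fin -sch_fin //; apply: esum_le_fin => G fG GL; exact: cs_fin.
have u0 : 0 <= uu a.
  by rewrite -lee_fin -uu_fin //; apply: esum_ge0 => b _; rewrite lee_fin mulr_ge0 // sqr_ge0.
have hs := sqr_sqrtr (mulr_ge0 M0 u0).
have := sch_ge0 La; have := sqrtr_ge0 (M * uu a); nra.
Qed.

Let sum_uu F : finite_set F -> F `<=` L -> \sum_(a \in F) uu a <= M * Y.
Proof.
move=> fF FL; rewrite -lee_fin -fsumEFin //.
rewrite (@eq_fsbigr _ _ _ _ _ (fun a => \esum_(b in L) (K a b * y b ^+ 2)%:E)); last first.
  move=> a; rewrite inE => Fa; rewrite uu_fin //; exact: FL.
rewrite fsbig_finite //= -esum_sum; last first.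
  by move=> b a _ _; rewrite lee_fin mulr_ge0 // sqr_ge0.
under eq_esum do rewrite sumEFin.
apply: esum_le_fin => G fG GL.
apply: le_trans (_ : \sum_(b \in G) M * y b ^+ 2 <= _); last first.
  rewrite fsbig_finite //= -mulr_sumr -fsbig_finite //; apply: ler_wpM2l => //.
  exact: fy2.
apply: fsum_le => // b Gb.
rewrite -mulr_suml mulrC [X in _ <= X]mulrC; apply: ler_wpM2l; first exact: sqr_ge0.
rewrite -fsbig_finite //; exact: (fcol (GL b Gb) fF FL).
Qed.

Lemma schur_bound : (\esum_(a in L) (sch a ^+ 2)%:E <= (M ^+ 2 * Y)%:E)%E.
Proof.
apply: esum_le_fin => F fF FL.
apply: le_trans (_ : \sum_(a \in F) M * uu a <= _).
  apply: fsum_le => // a Fa; exact: sch_sq (FL a Fa).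
rewrite fsbig_finite //= -mulr_sumr -fsbig_finite // expr2 -mulrA.
apply: ler_wpM2l => //; exact: sum_uu.
Qed.

End Schur.


Section Geo.
Variable d : nat.

Definition zv (a : Zd d) (i : 'I_d) : R := (a ord0 i)%:~R.

Lemma zabsE (a : Zd d) : zabs a = sqrt (\sum_(i < d) zv a i ^+ 2).
Proof. by []. Qed.

Lemma zabs_ge0 (a : Zd d) : 0 <= zabs a.
Proof. exact: sqrtr_ge0. Qed.

Lemma zabsD (a b : Zd d) : zabs (a + b) <= zabs a + zabs b.
Proof.
rewrite !zabsE.
have -> : \sum_(i < d) zv (a + b) i ^+ 2 = \sum_(i < d) (zv a i + zv b i) ^+ 2.
  by apply: eq_bigr => i _; rewrite /zv mxE intrD.
exact: mink_seq.
Qed.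

Lemma zabsN (a : Zd d) : zabs (- a) = zabs a.
Proof.
rewrite !zabsE; congr sqrt; apply: eq_bigr => i _; rewrite /zv mxE.
by rewrite -[RHS]sqrrN -intrN.
Qed.

Lemma zabs_diff (a b : Zd d) :
  zabs a - zabs b <= zdist a b /\ zabs b - zabs a <= zdist a b.
Proof.
have h1 : zabs a <= zabs (a - b) + zabs b.
  by have := zabsD (a - b) b; rewrite subrK.
have h2 : zabs a <= zabs (a + b) + zabs b.
  by have := zabsD (a + b) (- b); rewrite addrK zabsN.
have h3 : zabs b <= zabs (a - b) + zabs a.
  by have := zabsD (b - a) a; rewrite subrK -opprB zabsN.
have h4 : zabs b <= zabs (a + b) + zabs a.
  have := zabsD (a + b) (- a); rewrite zabsN.
  by have -> : a + b - a = b by rewrite addrC addKr.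
rewrite /zdist; split; rewrite le_min; apply/andP; split; lra.
Qed.

End Geo.

Lemma powRE' (a x : R) : 0 < a -> a `^ x = expR (x * ln a).
Proof. by move=> a0; rewrite /powR gt_eqF. Qed.

Definition W (t1 t2 : R) (d : nat) (a : Zd d) := expR (t1 * zabs a) * zbr a `^ t2.

Lemma zbr_ge1 d (a : Zd d) : 1 <= zbr a.
Proof. by rewrite /zbr le_max lexx orbT. Qed.

Lemma W_ge0 t1 t2 d (a : Zd d) : 0 <= W t1 t2 a.
Proof. by rewrite /W mulr_ge0 // ?powR_ge0 // ltW // expR_gt0. Qed.

Lemma eweight_ge0 C g1 g2 kappa d (a b : Zd d) : 0 <= C -> 0 <= eweight C g1 g2 kappa a b.
Proof. by move=> C0; rewrite /eweight !mulr_ge0 // ?powR_ge0 // ltW // expR_gt0. Qed.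

Lemma W_sq t1 t2 d (a : Zd d) (h : R) :
  h ^+ 2 * expR (2 * t1 * zabs a) * zbr a `^ (2 * t2) = (h * W t1 t2 a) ^+ 2.
Proof.
have z0 : 0 < zbr a by apply: lt_le_trans (zbr_ge1 a).
have E : forall x : R, expR x ^+ 2 = expR (2 * x).
  by move=> x; rewrite expr2 -exp.expRD; congr expR; ring.
by rewrite /W !powRE' // !exprMn !E !mulrA.
Qed.

Lemma ln_pos_le (x y : R) : 0 < x -> 0 < y -> x <= y -> ln x <= ln y.
Proof. by move=> x0 y0 h; rewrite ler_ln // posrE. Qed.

Lemma weight_le (C g1 g2 kappa t1 t2 : R) d (a b : Zd d) :
  0 <= g1 -> - g1 <= t1 -> t1 <= g1 -> - g2 <= t2 -> t2 <= g2 -> 0 <= kappa ->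
  2 `^ g2 <= C ->
  W t1 t2 a <= eweight C g1 g2 kappa a b * W t1 t2 b.
Proof.
move=> g10 t1a t1b t2a t2b k0 hC.
have [da db] := zabs_diff a b.
set A := zabs a in da db *; set B := zabs b in da db *.
set zd := zdist a b in da db *.
have A0 : 0 <= A := zabs_ge0 a.
have B0 : 0 <= B := zabs_ge0 b.
set za := zbr a; set zb := zbr b.
set D := Num.max zd 1; set m := Num.min za zb.
have za1 : 1 <= za := zbr_ge1 a.
have zb1 : 1 <= zb := zbr_ge1 b.
have D1 : 1 <= D by rewrite /D le_max lexx orbT.
have zdD : zd <= D by rewrite /D le_max lexx.
have m1 : 1 <= m by rewrite /m le_min za1 zb1.
have Aza : A <= za by rewrite /za /zbr le_max lexx.
have Bzb : B <= zb by rewrite /zb /zbr le_max lexx.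
have zale : za <= zb + D by rewrite /za /zbr ge_max -/A; apply/andP; split; lra.
have zble : zb <= za + D by rewrite /zb /zbr ge_max -/B; apply/andP; split; lra.
have za2 : za <= 2 * D * zb by nra.
have zb2 : zb <= 2 * D * za by nra.
have p1 : forall x : R, 1 <= x -> 0 < x by move=> x hx; lra.
have lnza := ln_pos_le (p1 _ za1) _ za2.
have lnzb := ln_pos_le (p1 _ zb1) _ zb2.
have h2 : 0 < (2%:R : R) by rewrite ltr0n.
rewrite !lnM ?posrE ?mulr_gt0 ?p1 // in lnza lnzb; try lra.
have l2 : 0 <= ln (2%:R : R) by apply: ln_ge0; rewrite ler1n.
have lD : 0 <= ln D by apply: ln_ge0.
have lm : 0 <= ln m by apply: ln_ge0.
have lzb : 0 <= ln zb by apply: ln_ge0.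
have lza : 0 <= ln za by apply: ln_ge0.
rewrite /eweight /W -/za -/zb -/A -/B -/zd -/D -/m.
rewrite !powRE' ?p1 //.
rewrite (powRE' _ h2) in hC.
have e1 : t1 * (A - B) <= g1 * zd by nra.
have e2 : t2 * (ln za - ln zb) <= g2 * (ln 2 + ln D) by nra.
have e3 : 0 <= kappa * ln m by apply: mulr_ge0.
set P := expR (g1 * zd) * expR (g2 * ln D) * expR (kappa * ln m) * (expR (t1 * B) * expR (t2 * ln zb)).
have -> : C * expR (g1 * zd) * expR (g2 * ln D) * expR (kappa * ln m) *
    (expR (t1 * B) * expR (t2 * ln zb)) = C * P by rewrite /P; ring.
have P0 : 0 <= P by rewrite /P !mulr_ge0 // ltW // expR_gt0.
apply: le_trans (_ : expR (g2 * ln 2) * P <= _); last exact: ler_wpM2r.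
rewrite /P -!exp.expRD exp.ler_expR; lra.
Qed.


Lemma hnormN v : hnorm (- v) = hnorm v.
Proof. by rewrite !hnormE /re /im !mxE !ReN !ImN !sqrrN. Qed.

Lemma fine_ge0_or (x : \bar R) : (x = -oo \/ 0 <= x)%E -> 0 <= fine x.
Proof. by case: x => [r | | ] //= [] // ; rewrite lee_fin. Qed.

Theorem proposition2p3 :
  forall (g2 kappa : R), 0 <= g2 -> 0 <= kappa ->
  exists C0 : R, 1 <= C0 /\
  forall C : R, C0 <= C ->
  forall (d : nat), leq 1 d ->
  forall (L : set (Zd d)) (g1 tg1 tg2 : R),
    0 <= g1 ->
    - g1 <= tg1 -> tg1 <= g1 ->
    - g2 <= tg2 -> tg2 <= g2 ->
  forall (A : Zd d -> Zd d -> M2) (z : Zd d -> C2),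
    inM C g1 g2 kappa L A ->
    inY tg1 tg2 L z ->
    exists w : Zd d -> C2,
      [/\ forall a, L a -> HasSum L (fun b => A a b *m z b) (w a),
          inY tg1 tg2 L w &
          ynorm tg1 tg2 L w <= mnorm C g1 g2 kappa L A * ynorm tg1 tg2 L z].
Proof.
move=> g2 kappa g20 k0.
exists (Num.max 1 (2 `^ g2)); split; first by rewrite le_max lexx.
move=> C hC d d1 L g1 tg1 tg2 g10 t1a t1b t2a t2b A z hA hz.
have C2 : 2 `^ g2 <= C by apply: le_trans hC; rewrite le_max lexx orbT.
have C0 : 0 <= C by apply: le_trans hC; rewrite le_max ler01.
pose K (a b : Zd d) := opnorm (A a b) * eweight C g1 g2 kappa a b.
pose y (b : Zd d) := hnorm (z b) * W tg1 tg2 b.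
have K0 a b : 0 <= K a b by rewrite /K mulr_ge0 ?opnorm_ge0 ?eweight_ge0.
have y0 b : 0 <= y b by rewrite /y mulr_ge0 ?hnorm_ge0 ?W_ge0.
have ynz : ynorm2 tg1 tg2 L z = \esum_(b in L) (y b ^+ 2)%:E.
  by apply: eq_esum => b _; rewrite W_sq.
have ynz0 : (0 <= ynorm2 tg1 tg2 L z)%E.
  by rewrite ynz; apply: esum_ge0 => b _; rewrite lee_fin sqr_ge0.
set Y := fine (ynorm2 tg1 tg2 L z).
have hY : \esum_(b in L) (y b ^+ 2)%:E = Y%:E.
  by rewrite -ynz /Y fineK // ge0_fin_numE.
have Y0 : 0 <= Y by rewrite -lee_fin -hY; apply: esum_ge0 => b _; rewrite lee_fin sqr_ge0.
set M := mnorm C g1 g2 kappa L A.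
have Mfin : forall a, L a -> mnormE C g1 g2 kappa L A = M%:E.
  move=> a La; rewrite /M /mnorm fineK // ge0_fin_numE //.
  apply: le_trans (_ : (\esum_(b in L) (K a b)%:E <= _)%E).
    by apply: esum_ge0 => b _; rewrite lee_fin.
  rewrite /mnormE le_max; apply/orP; left; apply: ereal_sup_ubound; by exists a.
have hrow : forall a, L a -> (\esum_(b in L) (K a b)%:E <= M%:E)%E.
  move=> a La; rewrite -(Mfin a La) /mnormE le_max; apply/orP; left.
  apply: ereal_sup_ubound; by exists a.
have hcol : forall b, L b -> (\esum_(a in L) (K a b)%:E <= M%:E)%E.
  move=> b Lb; rewrite -(Mfin b Lb) /mnormE le_max; apply/orP; right.
  apply: ereal_sup_ubound; by exists b.
have M0 : 0 <= M.
  have [[a La]|Ln] := pselect (exists a, L a).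
    rewrite -lee_fin; apply: le_trans _ (hrow a La).
    by apply: esum_ge0 => b _; rewrite lee_fin.
  have L0 : L = set0 by apply/seteqP; split => x // Lx; exfalso; apply: Ln; exists x.
  rewrite /M /mnorm /mnormE L0 !image_set0 ereal_sup0.
  by rewrite maxxx.
have Wpos : forall a : Zd d, 0 < W tg1 tg2 a.
  by move=> a; rewrite /W; apply: mulr_gt0; [exact: expR_gt0 | apply: powR_gt0; exact: (lt_le_trans _ (zbr_ge1 a))].
have bnd (a b : Zd d) : hnorm (A a b *m z b) * W tg1 tg2 a <= K a b * y b.
  rewrite /K /y.
  have e1 := opnorm_le (A a b) (z b).
  have e2 := @weight_le C g1 g2 kappa tg1 tg2 d a b g10 t1a t1b t2a t2b k0 C2.
  have := opnorm_ge0 (A a b); have := hnorm_ge0 (z b); have := hnorm_ge0 (A a b *m z b).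
  have := eweight_ge0 g1 g2 kappa a b C0; have := W_ge0 tg1 tg2 a; have := W_ge0 tg1 tg2 b.
  move=> *.
  apply: le_trans (_ : (opnorm (A a b) * hnorm (z b)) * (eweight C g1 g2 kappa a b * W tg1 tg2 b) <= _).
    by apply: ler_pM => //; rewrite mulr_ge0.
  by rewrite le_eqVlt; apply/orP; left; apply/eqP; ring.
have sge := sch_ge K0 y0 M0 hrow hY.
have ex : forall a : Zd d, exists s : Defs.C2, L a -> HasSum L (fun b => A a b *m z b) s.
  move=> a; have [La|nLa] := pselect (L a); last by exists 0.
  have [s Hs] : exists s, HasSum L (fun b => A a b *m z b) s.
    apply: (@exists_hassum _ _ _ (sch L K y a / W tg1 tg2 a)).
    apply: esum_le_fin => G fG GL.
    rewrite ler_pdivlMr // fsbig_finite //= mulr_suml -fsbig_finite //.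
    apply: le_trans (sge a G La fG GL); apply: fsum_le => // b _; exact: bnd.
  by exists s.
have [w Hw] := choice ex.
have wbound : forall a : Zd d, L a -> hnorm (w a) * W tg1 tg2 a <= sch L K y a.
  move=> a La; rewrite -ler_pdivlMr //; apply/ler_addgt0Pr => e e0.
  have [F0 [fF0 F0L HF]] := Hw a La e e0.
  have := HF F0 fF0 (@subset_refl _ F0) F0L.
  set S := \sum_(b \in F0) A a b *m z b => hS.
  have hS' : hnorm S <= sch L K y a / W tg1 tg2 a.
    rewrite ler_pdivlMr // /S fsbig_finite //=.
    apply: le_trans (_ : (\sum_(b <- finmap.enum_fset (fset_set F0)) hnorm (A a b *m z b)) * W tg1 tg2 a <= _).
      by apply: ler_wpM2r; [exact: W_ge0 | exact: hnorm_sum].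
    rewrite mulr_suml -fsbig_finite //.
    apply: le_trans (sge a F0 La fF0 F0L); apply: fsum_le => // b _; exact: bnd.
  have hn : hnorm (w a - S) = hnorm (S - w a) by rewrite -hnormN opprB.
  have := hnormD S (w a - S); rewrite (addrC S) subrK hn => h.
  lra.
have sb := schur_bound K0 y0 M0 hrow hcol hY.
have ynw : (ynorm2 tg1 tg2 L w <= (M ^+ 2 * Y)%:E)%E.
  rewrite /ynorm2; under eq_esum do rewrite W_sq.
  apply: le_trans sb; apply: le_esum => a La; rewrite lee_fin.
  have h := wbound a La.
  have p : 0 <= hnorm (w a) * W tg1 tg2 a by rewrite mulr_ge0 ?hnorm_ge0 ?W_ge0.
  nra.
have ynw0 : (0 <= ynorm2 tg1 tg2 L w)%E.
  by apply: esum_ge0 => b _; rewrite lee_fin W_sq sqr_ge0.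
exists w; split.
- by move=> a La; exact: Hw.
- by rewrite /inY; apply: le_lt_trans ynw _; exact: ltry.
rewrite /ynorm -/Y.
have : fine (ynorm2 tg1 tg2 L w) <= M ^+ 2 * Y.
  by rewrite -lee_fin fineK // ge0_fin_numE // (le_lt_trans ynw) // ltry.
move=> h; apply: le_trans (_ : sqrt (M ^+ 2 * Y) <= _).
  by rewrite ler_sqrt // mulr_ge0 // sqr_ge0.
by rewrite sqrtrM ?sqr_ge0 // sqrtr_sqr ger0_norm.
Qed.
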